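(* For any instance of the $k$-Densest Subgraph problem on a graph with $n$ vertices, the DLA of QWOA satisfies $\dim(\mathfrak g_{\mathrm{QWOA},k\text{-Densest-Subgraph}})=\mathcal O(n^4)$.
   Context: $k$-Densest Subgraph on an undirected simple graph $G=(V,E)$, $V=\{1,\dots,n\}$, $1<k<n$: feasible solutions $\mathcal S'$ are the $z\in\{0,1\}^n$ of Hamming weight $k$, with cost $C(z)$ the number of edges with both endpoints selected; $N=|\mathcal S'|=\binom nk$. On $\mathbb C^{N}$ with basis $\{|z\rangle:z\in\mathcal S'\}$ (the indexed feasible subspace), $H_C$ is diagonal with $H_C|z\rangle=C(z)|z\rangle$ and $H_M$ is the $N\times N$ all-ones matrix (equivalent up to identity to the complete-graph adjacency matrix). $\mathfrak g_{\mathrm{QWOA},k\text{-Densest-Subgraph}}$ is the real Lie algebra generated by $iH_C$ and $iH_M$ (smallest real subspace containing them and closed under commutators); its dimension is its real dimension. *)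

(* Defs.v *)
From mathcomp Require Import all_boot all_order all_algebra all_field.
Set Implicit Arguments. Unset Strict Implicit. Unset Printing Implicit Defensive.
Import Order.TTheory GRing.Theory Num.Theory.
Local Open Scope ring_scope.

Definition simple_graph (n : nat) (e : rel 'I_n) : Prop :=
  (forall u v, e u v = e v u) /\ (forall u, ~~ e u u).

(* Feasible solutions: subsets of V of size k (= bitstrings of Hamming weight k). *)
Definition feasible (n k : nat) : {set {set 'I_n}} := [set A : {set 'I_n} | #|A| == k].

(* number of edges with both endpoints in A (each unordered edge counted once) *)
Definition kds_cost (n : nat) (e : rel 'I_n) (A : {set 'I_n}) : nat :=
  #|[set p : 'I_n * 'I_n | [&& (p.1 < p.2)%N, e p.1 p.2, p.1 \in A & p.2 \in A]]|.

(* dimension N = |S'|; basis |z> indexed by 'I_N via enumeration of S' *)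
Definition Ndim (n k : nat) : nat := #|feasible n k|.

Definition feas_of (n k : nat) (i : 'I_(Ndim n k)) : {set 'I_n} :=
  enum_val i.

Definition H_C (n k : nat) (e : rel 'I_n) : 'M[algC]_(Ndim n k) :=
  \matrix_(i, j) (if i == j then (kds_cost e (feas_of i))%:R else 0).

Definition H_M (n k : nat) : 'M[algC]_(Ndim n k) := const_mx 1.

Definition lie_bracket (m : nat) (A B : 'M[algC]_m) : 'M[algC]_m :=
  A *m B - B *m A.

Inductive lie_closure (m : nat) (G : seq 'M[algC]_m) : 'M[algC]_m -> Prop :=
| lc_gen x : x \in G -> lie_closure G x
| lc_lin (a : algC) x y : a \is Num.real -> lie_closure G x -> lie_closure G y ->
    lie_closure G (a *: x + y)
| lc_brk x y : lie_closure G x -> lie_closure G y -> lie_closure G (lie_bracket x y).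

Definition real_lin_indep (m : nat) (s : seq 'M[algC]_m) : Prop :=
  forall c : 'I_(size s) -> algC, (forall i, c i \is Num.real) ->
    \sum_(i < size s) c i *: s`_i = 0 -> forall i, c i = 0.

Definition real_dim_le (m : nat) (L : 'M[algC]_m -> Prop) (d : nat) : Prop :=
  forall s : seq 'M[algC]_m, (forall x, x \in s -> L x) -> real_lin_indep s ->
    (size s <= d)%N.

Definition g_QWOA_kDS (n k : nat) (e : rel 'I_n) : 'M[algC]_(Ndim n k) -> Prop :=
  lie_closure [:: 'i *: H_C k e; 'i *: H_M n k].

(* Main.v *)
Require Import Defs.
From mathcomp Require Import all_boot all_order all_algebra all_field.
Import GRing.Theory Num.Theory.
Local Open Scope ring_scope.
Set Implicit Arguments. Unset Strict Implicit. Unset Printing Implicit Defensive.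

Lemma real_dim_span N R (b : 'I_R -> 'M[algC]_N) (L : 'M[algC]_N -> Prop) :
  (forall A, L A -> exists c : 'rV[algC]_R, A = \sum_j c 0 j *: b j) ->
  real_dim_le L (R + R).
Proof.
move=> HL s sL indep.
have /fin_all_exists [c Hc] : forall i : 'I_(size s), exists c : 'rV_R,
    s`_i = \sum_j c 0 j *: b j.
  by move=> i; apply: HL; apply: sL; apply: mem_nth.
pose W : 'M[algC]_(size s, R + R) :=
  row_mx (\matrix_(i, j) 'Re (c i 0 j)) (\matrix_(i, j) 'Im (c i 0 j)).
have Wr : forall i j, W i j \is Num.real.
  move=> i j; rewrite /W -[j]splitK; case: (split j) => j' /=.
    by rewrite row_mxEl mxE Creal_Re.
  by rewrite row_mxEr mxE Creal_Im.
have key : forall a : 'rV_(size s), (forall i, a 0 i \is Num.real) ->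
    a *m W = 0 -> a = 0.
  move=> a ar; rewrite mul_mx_row -row_mx0 => /eq_row_mx [h1 h2].
  have hc : forall j, \sum_i a 0 i * c i 0 j = 0.
    move=> j; move/rowP/(_ j): h1; move/rowP/(_ j): h2.
    rewrite !mxE => e2 e1.
    under eq_bigr => i _ do rewrite [c i 0 j]Crect mulrDr mulrCA.
    rewrite big_split /= -mulr_sumr. idtac.
    have mE : forall i j, (\matrix_(i, j) 'Re (c i 0 j) : 'M[algC]_(size s, R)) i j = 'Re (c i 0 j) by move=> *; rewrite mxE.
    have mI : forall i j, (\matrix_(i, j) 'Im (c i 0 j) : 'M[algC]_(size s, R)) i j = 'Im (c i 0 j) by move=> *; rewrite mxE.
    rewrite (eq_bigr _ (fun i _ => congr1 (fun x => a 0 i * x) (mE i j))) in e1.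
    rewrite (eq_bigr _ (fun i _ => congr1 (fun x => a 0 i * x) (mI i j))) in e2.
    rewrite e1 e2.
    by rewrite mulr0 addr0.
  have hs : \sum_(i < size s) a 0 i *: s`_i = 0.
    under eq_bigr => i _ do rewrite Hc scaler_sumr.
    rewrite exchange_big /=.
    apply: big1 => j _.
    under eq_bigr => i _ do rewrite scalerA.
    by rewrite -scaler_suml hc scale0r.
  apply/rowP => i; rewrite mxE.
  exact: (indep (fun i => a 0 i) ar hs i).
have rf : row_free W.
  rewrite -kermx_eq0; apply/eqP/row_matrixP => i; rewrite row0.
  set v := row i (kermx W).
  have vW : v *m W = 0 by apply/sub_kermxP; exact: row_sub.
  clearbody v.
  have hRe : map_mx (fun x => 'Re x) v = 0.
    apply: key; first by move=> j; rewrite mxE Creal_Re.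
    apply/rowP => j; rewrite !mxE.
    move/rowP/(_ j): vW; rewrite !mxE => /(congr1 (fun x => 'Re x)); rewrite raddf0 raddf_sum /= => e; apply: etrans e.
    apply: eq_bigr => k _; rewrite mxE ReMr //.
  have hIm : map_mx (fun x => 'Im x) v = 0.
    apply: key; first by move=> j; rewrite mxE Creal_Im.
    apply/rowP => j; rewrite !mxE.
    move/rowP/(_ j): vW; rewrite !mxE => /(congr1 (fun x => 'Im x)); rewrite raddf0 raddf_sum /= => e; apply: etrans e.
    apply: eq_bigr => k _; rewrite mxE ImMr //.
  apply/rowP => j; rewrite mxE [v 0 j]Crect.
  move/rowP/(_ j): hRe; move/rowP/(_ j): hIm.
  rewrite !mxE => -> ->; by rewrite mulr0 addr0.
by move: rf; rewrite /row_free => /eqP <-; apply: rank_leq_col.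
Qed.
Definition BCm N (kap : 'I_N -> nat) (P : 'M[algC]_N) :=
  forall i j i' j', kap i = kap i' -> kap j = kap j' -> P i j = P i' j'.
Definition Dg N (kap : 'I_N -> nat) : 'M[algC]_N :=
  \matrix_(i, j) (if i == j then (kap i)%:R else 0).

Section BC.
Variables (N : nat) (kap : 'I_N -> nat).
Local Notation BC := (BCm kap).
Local Notation H := (Dg kap).

Lemma HmulE (Q : 'M[algC]_N) i j : (H *m Q) i j = (kap i)%:R * Q i j.
Proof.
rewrite mxE (bigD1 i) //= big1 ?addr0; first by rewrite mxE eqxx.
by move=> l /negbTE nl; rewrite mxE eq_sym nl mul0r.
Qed.

Lemma mulHE (Q : 'M[algC]_N) i j : (Q *m H) i j = Q i j * (kap j)%:R.
Proof.
rewrite mxE (bigD1 j) //= big1 ?addr0; first by rewrite mxE eqxx.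
by move=> l /negbTE nl; rewrite mxE nl mulr0.
Qed.

Lemma BC_add P Q : BC P -> BC Q -> BC (P + Q).
Proof. by move=> hP hQ i j i' j' e1 e2; rewrite !mxE (hP _ _ _ _ e1 e2) (hQ _ _ _ _ e1 e2). Qed.
Lemma BC_scale a P : BC P -> BC (a *: P).
Proof. by move=> hP i j i' j' e1 e2; rewrite !mxE (hP _ _ _ _ e1 e2). Qed.
Lemma BC_opp P : BC P -> BC (- P).
Proof. by move=> hP i j i' j' e1 e2; rewrite !mxE (hP _ _ _ _ e1 e2). Qed.
Lemma BC_sub P Q : BC P -> BC Q -> BC (P - Q).
Proof. by move=> hP hQ; apply: BC_add => //; apply: BC_opp. Qed.
Lemma BC_mul P Q : BC P -> BC Q -> BC (P *m Q).
Proof.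
move=> hP hQ i j i' j' e1 e2; rewrite !mxE; apply: eq_bigr => l _.
by rewrite (hP i l i' l) // (hQ l j l j').
Qed.
Lemma BC_HQ Q : BC Q -> BC (H *m Q).
Proof. by move=> hQ i j i' j' e1 e2; rewrite !HmulE e1 (hQ _ _ _ _ e1 e2). Qed.
Lemma BC_QH Q : BC Q -> BC (Q *m H).
Proof. by move=> hQ i j i' j' e1 e2; rewrite !mulHE e2 (hQ _ _ _ _ e1 e2). Qed.
Lemma BC_const a : BC (const_mx a).
Proof. by move=> *; rewrite !mxE. Qed.

Definition inV (A : 'M[algC]_N) := exists x, BC (A - x *: H).

Lemma inV_lin a X Y : inV X -> inV Y -> inV (a *: X + Y).
Proof.
move=> [x hx] [y hy]; exists (a * x + y).
rewrite scalerDl -scalerA.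
have -> : a *: X + Y - (a *: (x *: H) + y *: H) = a *: (X - x *: H) + (Y - y *: H).
  by rewrite scalerBr opprD addrACA.
by apply: BC_add => //; apply: BC_scale.
Qed.

Lemma inV_brk X Y : inV X -> inV Y -> inV (lie_bracket X Y).
Proof.
move=> [x hx] [y hy]; exists 0; rewrite scale0r subr0.
move: hx hy; set P := X - x *: H; set Q := Y - y *: H => hP hQ.
have eX : X = x *: H + P by rewrite /P addrC subrK.
have eY : Y = y *: H + Q by rewrite /Q addrC subrK.
clearbody P Q; rewrite eX eY.
rewrite /lie_bracket !mulmxDl !mulmxDr.
have -> : (y *: H) *m (x *: H) = (x *: H) *m (y *: H).
  by rewrite -!scalemxAl -!scalemxAr !scalerA mulrC.
rewrite -[X in BC (X - _)]addrA -[X in BC (_ - X)]addrA opprD addrACA subrr add0r.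
apply: BC_sub; (apply: BC_add; last apply: BC_add) => //;
  rewrite ?(=^~ scalemxAl, =^~ scalemxAr); try apply: BC_scale;
  by [apply: BC_HQ | apply: BC_QH | apply: BC_mul].
Qed.

End BC.

From mathcomp Require Import zify.

Lemma real_dim_le_mono N (L : 'M[algC]_N -> Prop) d d' :
  real_dim_le L d -> (d <= d')%N -> real_dim_le L d'.
Proof. by move=> h le s sL si; apply: leq_trans (h s sL si) le. Qed.

Theorem corollary4 : exists C : nat,
  forall (n k : nat) (e : rel 'I_n), simple_graph e -> (1 < k)%N -> (k < n)%N ->
    real_dim_le (@g_QWOA_kDS n k e) (C * n ^ 4)%N.
Proof.
exists 10%N => n k e _ hk hkn.
pose kap (i : 'I_(Ndim n k)) := kds_cost e (feas_of i).
have Hdg : H_C k e = Dg kap by [].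
have kb : forall i, (kap i <= n * n)%N.
  move=> i; rewrite /kap /kds_cost; apply: leq_trans (max_card _) _.
  by rewrite card_prod card_ord.
have sub : forall A, @g_QWOA_kDS n k e A -> inV kap A.
  move=> A; elim => {A}.
  - move=> x; rewrite !inE => /orP [] /eqP ->.
      by exists 'i; rewrite Hdg subrr; apply: BC_const.
    by exists 0; rewrite scale0r subr0 /H_M; apply: BC_scale; apply: BC_const.
  - by move=> a x y _ _ hx _ hy; apply: inV_lin.
  - by move=> x y _ hx _ hy; apply: inV_brk.
pose m := (n * n).+1.
pose cls (i : 'I_(Ndim n k)) : 'I_m := inord (kap i).
have clsK : forall i i', cls i = cls i' -> kap i = kap i'.
  move=> i i' /(congr1 (@nat_of_ord m)); rewrite /cls !inordK // ltnS; exact: kb.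
pose G (a b : 'I_m) : 'M[algC]_(Ndim n k) :=
  \matrix_(i, j) ((cls i == a) && (cls j == b))%:R.
pose bI (y : option ('I_m * 'I_m)) :=
  match y with None => Dg kap | Some p => G p.1 p.2 end.
have L : real_dim_le (@g_QWOA_kDS n k e) (#|{: option ('I_m * 'I_m)}| + #|{: option ('I_m * 'I_m)}|).
  apply: (@real_dim_span _ _ (fun j : 'I_#|{: option ('I_m * 'I_m)}| => bI (enum_val j))) => A /sub [x hx].
  pose P := A - x *: Dg kap.
  pose pk a := [pick i | cls i == a].
  pose coef (y : option ('I_m * 'I_m)) := match y with None => x
    | Some p => match pk p.1, pk p.2 with Some i, Some j => P i j | _, _ => 0 end end.
  exists (\row_j coef (enum_val j)).
  under eq_bigr do rewrite mxE.
  rewrite -(big_enum_val (fun y => coef y *: bI y)).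
  rewrite (bigD1 None) //=.
  apply/matrixP => i j; rewrite !mxE summxE (bigD1 (Some (cls i, cls j))) //= big1 ?addr0.
    rewrite !mxE !eqxx mulr1 /pk.
    case: pickP => [i' /eqP hi|]; last by move/(_ i); rewrite /= eqxx.
    case: pickP => [j' /eqP hj|]; last by move/(_ j); rewrite /= eqxx.
    rewrite -(hx i j i' j' (clsK _ _ (esym hi)) (clsK _ _ (esym hj))) /P !mxE.
    by rewrite addrC subrK.
  move=> [[a b]|] /andP [h1 hne] //; rewrite /bI /G !mxE /=.
  have : ~~ ((cls i == a) && (cls j == b)).
    by apply: contra hne => /andP [/eqP -> /eqP ->].
  by move/negbTE => ->; rewrite mulr0.
have hcard : #|{: option ('I_m * 'I_m)}| = (m * m).+1.
  by rewrite card_option card_prod card_ord.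
apply: real_dim_le_mono L _; rewrite hcard /m.
have hn : (2 <= n)%N by lia.
have -> : (n ^ 4 = (n * n) * (n * n))%N by rewrite !expnS expn0 muln1 !mulnA.
move: (n * n) (leq_mul hn hn) => t ht.
nia.
Qed.
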